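(* Let $p$ be an odd prime and let $c,d$ be positive integers with $36\log_2 p\leq d\leq 3\log_2 c$. Let $L\in\mathbb{F}_p^{d\times c}$ be a matrix whose columns are pairwise distinct vectors of $\mathbb{F}_p^d$, and let $v$ be uniformly distributed on $\{0,1\}^d\subseteq\mathbb{F}_p^d$. Then \[ \mathbb{P}\big[L^\top v\in\{0,1\}^c\big]\leq 3\cdot 2^{-d/(36p^2)} . \] *)

(* Defs.v *)
From HB Require Import structures.
From mathcomp Require Import all_boot all_order all_algebra.
From mathcomp Require Import all_classical all_reals all_analysis.
Set Implicit Arguments. Unset Strict Implicit. Unset Printing Implicit Defensive.
Import Order.TTheory GRing.Theory Num.Theory.
Local Open Scope ring_scope.

Definition binvec (K : nzRingType) (n : nat) (v : 'cV[K]_n) : bool :=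
  [forall i, (v i 0 == 0) || (v i 0 == 1)].

Definition prob_binary (R : realType) (p d c : nat) (L : 'M['F_p]_(d, c)) : R :=
  (#|[set v : 'cV['F_p]_d | binvec v && binvec (L^T *m v)]|)%:R /
  (#|[set v : 'cV['F_p]_d | binvec v]|)%:R.

(* Main.v *)
Require Import Defs.
From HB Require Import structures.
From mathcomp Require Import all_boot all_order all_algebra.
From mathcomp Require Import all_classical all_reals all_analysis.
From mathcomp Require Import ring lra.
Import Order.TTheory GRing.Theory Num.Theory.
Local Open Scope ring_scope.

Set Implicit Arguments. Unset Strict Implicit. Unset Printing Implicit Defensive.

Definition bin (K : nzRingType) (x : K) : bool := (x == 0) || (x == 1).

Lemma two_neq0 (p : nat) : prime p -> odd p -> (1 + 1 : 'F_p) != 0.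
Proof.
move=> pp po; have -> : (1 + 1 : 'F_p) = 2%:R by [].
rewrite -(dvdn_pcharf (pchar_Fp pp)).
apply/negP => /(dvdn_leq (isT : (0 < 2)%N)) h.
have := prime_gt1 pp; case: p pp po h => [|[|[|p]]] //.
Qed.

Lemma four_bin (p : nat) : prime p -> odd p -> forall x a b : 'F_p,
  a != 0 -> b != 0 -> bin x -> bin (x + a) -> bin (x + b) -> bin (x + a + b) -> False.
Proof.
move=> pp po x a b a0 b0 hx ha hb hab.
have h2 := two_neq0 pp po.
have h1 : (1 : 'F_p) != 0 := oner_neq0 _.
move: hx ha hb hab; rewrite /bin.
case/orP => /eqP ->; rewrite ?add0r.
- rewrite (negbTE a0) (negbTE b0) /= => /eqP -> /eqP ->.
  rewrite (negbTE h2) /=.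
  by rewrite -subr_eq0 -addrA subrr addr0 (negbTE h1).
- have e : forall y : 'F_p, (1 + y == 1) = (y == 0).
    by move=> y; rewrite -{2}(addr0 1) (inj_eq (addrI 1)).
  rewrite !e (negbTE a0) (negbTE b0) !orbF => /eqP ha /eqP hb.
  rewrite ha add0r (negbTE b0) /= => /eqP hb1; move: hb.
  by rewrite hb1 => /eqP; rewrite (negbTE h2).
Qed.


Definition dotc (p d : nat) (u : 'I_d -> 'F_p) (v : 'cV['F_p]_d) : 'F_p :=
  \sum_i u i * v i 0.

Section Count.
Variables (p d m : nat) (pp : prime p) (podd : odd p).
Variables (ii jj : nat -> 'I_d) (w : nat -> 'I_d -> 'F_p) (g : 'F_p).
Hypothesis Hij : forall t, (t < m)%N -> ii t != jj t.
Hypothesis Hdis : forall s t, (s < t)%N -> (t < m)%N ->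
  [&& ii t != ii s, ii t != jj s, jj t != ii s & jj t != jj s].
Hypothesis Htri : forall s t, (s < t)%N -> (t < m)%N -> w t (ii s) = 0 /\ w t (jj s) = 0.
Hypothesis Hnz : forall t, (t < m)%N -> w t (ii t) != 0 /\ w t (jj t) != 0.

Definition zeroat k (v : 'cV['F_p]_d) :=
  [forall s : 'I_m, (s < k)%N ==> (v (ii s) 0 == 0) && (v (jj s) 0 == 0)].
Definition Zs k := [set v : 'cV['F_p]_d | binvec v && zeroat k v].
Definition Qs k := [set v : 'cV['F_p]_d | [&& binvec v, zeroat k v &
   [forall t : 'I_m, (k <= t)%N ==> bin (g + dotc (w t) v)]]].

Definition zer k (v : 'cV['F_p]_d) : 'cV['F_p]_d :=
  \col_i (if (i == ii k) || (i == jj k) then 0 else v i 0).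

Lemma binvecP (v : 'cV['F_p]_d) : reflect (forall i, bin (v i 0)) (binvec v).
Proof.
apply: (iffP forallP) => h i; first exact: h.
exact: h.
Qed.

Lemma decomp k (u : 'I_d -> 'F_p) v : (k < m)%N ->
  dotc u v = dotc u (zer k v) + u (ii k) * v (ii k) 0 + u (jj k) * v (jj k) 0.
Proof.
move=> km; have hij := Hij km.
set S := \sum_(i < d | (i != ii k) && (i != jj k)) u i * v i 0.
have -> : dotc u (zer k v) = S.
  rewrite /dotc (bigD1 (ii k)) //= (bigD1 (jj k)) 1?eq_sym //=.
  rewrite !mxE !eqxx /= orbT !mulr0 !add0r.
  apply: eq_bigr => i /andP [h1 h2].
  by rewrite mxE (negbTE h1) (negbTE h2).
rewrite /dotc (bigD1 (ii k)) //= (bigD1 (jj k)) 1?eq_sym //=.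
by rewrite -/S addrA addrC addrA.
Qed.

Lemma bin01 (x : 'F_p) : bin x -> x = (if x == 1 then 1 else 0).
Proof. by case/orP => /eqP ->; rewrite ?eqxx // eq_sym oner_eq0. Qed.

Lemma zerQ k v : (k < m)%N -> v \in Qs k -> zer k v \in Qs k.+1.
Proof.
move=> km; rewrite !inE => /and3P [bv zv cv].
move/binvecP: bv => bv.
apply/and3P; split.
- apply/binvecP => i; rewrite mxE; case: ifP => _; last exact: bv.
  by rewrite /bin eqxx.
- apply/forallP => s; apply/implyP => hs; rewrite !mxE.
  rewrite ltnS leq_eqVlt in hs; case/orP: hs => [/eqP hsk | hsk].
    by rewrite hsk !eqxx /= orbT.
  have := forallP zv s; rewrite hsk /= => /andP [/eqP h1 /eqP h2].
  by rewrite h1 h2; case: ifP; case: ifP.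
- apply/forallP => t; apply/implyP => ht.
  have := forallP cv t; rewrite (ltnW ht) /=.
  have -> : dotc (w t) (zer k v) = dotc (w t) v => //.
  apply: eq_bigr => i _; rewrite mxE; case: ifP => // /orP [] /eqP ->;
    have [h1 h2] := Htri ht (ltn_ord t); by rewrite ?h1 ?h2 !mul0r.
Qed.

Lemma fiber k u : (k < m)%N -> (#|[set v in Qs k | zer k v == u]| <= 3)%N.
Proof.
move=> km; set F := [set v in Qs k | zer k v == u].
pose h (v : 'cV['F_p]_d) := (v (ii k) 0 == 1, v (jj k) 0 == 1).
have hinj : {in F &, injective h}.
  move=> v1 v2; rewrite !inE => /andP [q1 /eqP z1] /andP [q2 /eqP z2] [e1 e2].
  move: q1 q2 => /and3P [/binvecP b1 _ _] /and3P [/binvecP b2 _ _].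
  apply/matrixP => i j; rewrite (ord1 j).
  case: (eqVneq i (ii k)) => [-> | ni].
    by rewrite (bin01 (b1 _)) (bin01 (b2 (ii k))) e1.
  case: (eqVneq i (jj k)) => [-> | nj].
    by rewrite (bin01 (b1 _)) (bin01 (b2 (jj k))) e2.
  have := congr1 (fun M : 'cV['F_p]_d => M i 0) z1; have := congr1 (fun M : 'cV['F_p]_d => M i 0) z2.
  by rewrite /= !mxE (negbTE ni) (negbTE nj) /= => -> ->.
rewrite -(card_in_imset hinj).
rewrite leqNgt; apply/negP => h4.
have hT : h @: F = [set: bool * bool].
  by apply/eqP; rewrite eqEcard finset.subsetT cardsT card_prod card_bool.
have key : forall b1 b2 : bool, bin (g + dotc (w k) u + w k (ii k) * (if b1 then 1 else 0)
    + w k (jj k) * (if b2 then 1 else 0)).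
  move=> b1 b2; have : (b1, b2) \in h @: F by rewrite hT inE.
  case/imsetP => v; rewrite !inE => /andP [qv /eqP zv] [e1 e2].
  move: qv => /and3P [/binvecP bv _ cv].
  have := forallP cv (Ordinal km); rewrite leqnn /=.
  rewrite (decomp (w k) v km) zv.
  rewrite (bin01 (bv (ii k))) (bin01 (bv (jj k))) -e1 -e2.
  by rewrite !addrA.
have [a0 b0] := Hnz km.
apply: (@four_bin p pp podd (g + dotc (w k) u) _ _ a0 b0).
- by have := key false false; rewrite !mulr0 !addr0.
- by have := key true false; rewrite mulr0 addr0 mulr1.
- by have := key false true; rewrite mulr0 addr0 mulr1.
- by have := key true true; rewrite !mulr1.
Qed.

Lemma Qstep k : (k < m)%N -> (#|Qs k| <= 3 * #|Qs k.+1|)%N.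
Proof.
move=> km.
rewrite -sum1_card (partition_big_imset (zer k)) /=.
apply: (@leq_trans (\sum_(u in zer k @: Qs k) 3)).
  apply: leq_sum => u _.
  have := fiber u km; rewrite -sum1dep_card.
  by apply: leq_trans; rewrite leq_eqVlt; apply/orP; left; apply/eqP; apply: eq_bigl => v; rewrite inE.
rewrite sum_nat_const mulnC leq_mul2l /=.
apply/subset_leq_card/fintype.subsetP => x /imsetP [v hv ->]; exact: zerQ.
Qed.

Definition ext k (x : 'cV['F_p]_d * (bool * bool)) : 'cV['F_p]_d :=
  \col_i (if i == ii k then (if x.2.1 then 1 else 0)
          else if i == jj k then (if x.2.2 then 1 else 0) else x.1 i 0).

Lemma val01 (a b : bool) : (if a then 1 else 0 : 'F_p) = (if b then 1 else 0) -> a = b.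
Proof. by case: a; case: b => // /eqP; rewrite ?oner_eq0 // eq_sym oner_eq0. Qed.

Lemma Zstep k : (k < m)%N -> (4 * #|Zs k.+1| <= #|Zs k|)%N.
Proof.
move=> km; have hij := Hij km.
have hji : jj k != ii k by rewrite eq_sym.
have hinj : {in finset.setX (Zs k.+1) [set: bool * bool] &, injective (ext k)}.
  move=> [u1 [a1 b1]] [u2 [a2 b2]]; rewrite !inE /=.
  move=> /andP [/andP [_ z1] _] /andP [/andP [_ z2] _] e.
  have E := fun i => congr1 (fun M : 'cV['F_p]_d => M i 0) e.
  have ea : a1 = a2.
    by apply: val01; have := E (ii k); rewrite /= !mxE eqxx.
  have eb : b1 = b2.
    by apply: val01; have := E (jj k); rewrite /= !mxE (negbTE hji) eqxx.
  subst a2 b2; congr (_, _).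
  have := forallP z1 (Ordinal km); have := forallP z2 (Ordinal km).
  rewrite /= ltnSn /= => /andP [/eqP z21 /eqP z22] /andP [/eqP z11 /eqP z12].
  apply/matrixP => i j; rewrite (ord1 j).
  case: (eqVneq i (ii k)) => [-> | ni]; first by rewrite z11 z21.
  case: (eqVneq i (jj k)) => [-> | nj]; first by rewrite z12 z22.
  by have := E i; rewrite /= !mxE (negbTE ni) (negbTE nj).
rewrite (_ : (4 * #|Zs k.+1|)%N = #|finset.setX (Zs k.+1) [set: bool * bool]|); last first.
  by rewrite cardsX cardsT card_prod card_bool mulnC.
rewrite -(card_in_imset hinj).
apply/subset_leq_card/fintype.subsetP => x /imsetP [[u [a b]] hu ->].
move: hu; rewrite !inE /= => /andP [/andP [/binvecP bu zu] _].
apply/andP; split.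
- apply/binvecP => i; rewrite mxE.
  case: ifP => _; first by case: a; rewrite /bin eqxx ?orbT.
  case: ifP => _; first by case: b; rewrite /bin eqxx ?orbT.
  exact: bu.
- apply/forallP => s; apply/implyP => hs.
  have /and4P [h1 h2 h3 h4] := Hdis hs km.
  rewrite !mxE (eq_sym (ii s)) (negbTE h1) (eq_sym (ii s) (jj k)) (negbTE h3).
  rewrite (eq_sym (jj s) (ii k)) (negbTE h2) (eq_sym (jj s)) (negbTE h4).
  by have := forallP zu s; rewrite ltnS (ltnW hs).
Qed.

Lemma Qchain n : (n <= m)%N -> (#|Qs 0| <= 3 ^ n * #|Qs n|)%N.
Proof.
elim: n => [|n IH] hn; first by rewrite expn0 mul1n.
apply: leq_trans (IH (ltnW hn)) _.
by rewrite expnS [(3 * _)%N]mulnC -mulnA leq_mul2l Qstep ?orbT.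
Qed.

Lemma Zchain n : (n <= m)%N -> (4 ^ n * #|Zs n| <= #|Zs 0|)%N.
Proof.
elim: n => [|n IH] hn; first by rewrite mul1n.
apply: leq_trans _ (IH (ltnW hn)).
by rewrite expnS -mulnA mulnCA leq_mul2l Zstep ?orbT.
Qed.

Lemma count_main :
  (#|Qs 0| * 4 ^ m <= 3 ^ m * #|[set v : 'cV['F_p]_d | binvec v]|)%N.
Proof.
have Z0 : Zs 0 = [set v | binvec v].
  apply/setP => v; rewrite !inE; case: (binvec v) => //=.
  by apply/forallP => s; rewrite ltn0.
have QZ : (#|Qs m| <= #|Zs m|)%N.
  by apply/subset_leq_card/fintype.subsetP => v; rewrite !inE => /and3P [-> -> _].
rewrite -Z0; apply: leq_trans (_ : 3 ^ m * #|Qs m| * 4 ^ m <= _)%N.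
  by rewrite leq_mul2r Qchain ?orbT.
rewrite -mulnA leq_mul2l; apply/orP; right.
by rewrite mulnC; apply: leq_trans (Zchain (leqnn m)); rewrite leq_mul2l QZ orbT.
Qed.

End Count.


Lemma card_bigcup_le (I T : finType) (P : pred I) (A : I -> {set T}) :
  (#|\bigcup_(i | P i) A i| <= \sum_(i | P i) #|A i|)%N.
Proof.
elim/big_rec2: _ => [|i B n Pi IH]; first by rewrite cards0.
by rewrite cardsU; apply: leq_trans (leq_subr _ _) _; rewrite leq_add2l.
Qed.

Section Build.
Variables (p d c : nat) (pp : prime p) (L : 'M['F_p]_(d, c)) (i0 : 'I_d) (j0 : 'I_c).
Hypothesis Ldist : injective (fun j : 'I_c => col j L).

Lemma pigeon (X : {set 'I_c}) (f : 'I_c -> 'F_p) :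
  exists a, (#|X| <= p * #|[set y in X | f y == a]|)%N.
Proof.
pose a := [arg max_(a > (0 : 'F_p)) #|[set y in X | f y == a]|].
have hmax : forall b, (#|[set y in X | f y == b]| <= #|[set y in X | f y == a]|)%N.
  by rewrite /a; case: arg_maxnP => //= a' _ H b; apply: H.
exists a.
have -> : #|X| = (\sum_(b : 'F_p) #|[set y in X | f y == b]|)%N.
  rewrite -sum1_card (partition_big f xpredT) //=.
  by apply: eq_bigr => b _; rewrite sum1dep_card.
apply: leq_trans (_ : \sum_(b : 'F_p) #|[set y in X | f y == a]| <= _)%N.
  by apply: leq_sum => b _; apply: hmax.
by rewrite sum_nat_const card_Fp.
Qed.
Lemma colE (j1 j2 : 'I_c) : (forall i, L i j1 = L i j2) -> j1 = j2.
Proof.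
move=> h; apply: Ldist; apply/matrixP => i k; rewrite !mxE; exact: h.
Qed.

Lemma step (J : {set 'I_c}) (U : {set 'I_d}) :
  (forall j1 j2 i, j1 \in J -> j2 \in J -> i \in U -> L i j1 = L i j2) ->
  (1 + #|~: U| * (p - 1) < #|J|)%N ->
  exists i j a b x, [/\ i \notin U, j \notin U, i != j, x \in J &
     [/\ L i x != a, L j x != b &
     (#|J| <= p ^ 2 * #|[set y in J | (L i y == a) && (L j y == b)]|)%N]].
Proof.
move=> agr big.
have p0 : (0 < p)%N := prime_gt0 pp.
pose a_ i := xchoose (pigeon J (fun y => L i y)).
have ha i : (#|J| <= p * #|[set y in J | L i y == a_ i]|)%N := xchooseP (pigeon J (fun y => L i y)).
pose N i := [set y in J | L i y != a_ i].
have : [exists i, (i \notin U) && (p <= #|N i|)%N].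
  apply: contraT => /existsPn H.
  pose M := [set y in J | [forall i, (i \notin U) ==> (L i y == a_ i)]].
  have M1 : (#|M| <= 1)%N.
    apply/card_le1_eqP => y1 y2; rewrite !inE => /andP [j1 f1] /andP [j2 f2].
    apply: colE => i; case: (boolP (i \in U)) => iU; first exact: agr.
    by have := forallP f1 i; have := forallP f2 i; rewrite iU /= => /eqP -> /eqP ->.
  have sub : J \subset M :|: \bigcup_(i in ~: U) N i.
    apply/fintype.subsetP => y yJ; rewrite !inE.
    case: (boolP [forall i, (i \notin U) ==> (L i y == a_ i)]) => hf.
      by rewrite yJ.
    move/forallPn: hf => [i]; rewrite negb_imply => /andP [iU ne].
    apply/orP; right; apply/bigcupP; exists i; first by rewrite inE.
    by rewrite inE yJ.
  have := subset_leq_card sub; rewrite cardsU => h1.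
  have h2 := card_bigcup_le (mem (~: U)) N.
  have h3 : (\sum_(i in ~: U) #|N i| <= \sum_(i in ~: U) (p - 1))%N.
    apply: leq_sum => i; rewrite inE => iU.
    have := H i; rewrite iU /= -ltnNge => hi.
    by rewrite -ltnS subn1 prednK.
  move: h3; rewrite sum_nat_const => h3.
  have : (#|J| <= 1 + #|~: U| * (p - 1))%N.
    apply: leq_trans (leq_trans h1 (leq_subr _ _)) _.
    by apply: leq_add => //; apply: leq_trans h2 h3.
  by rewrite leqNgt big.
case/existsP => i /andP [iU Ni].
pose a := a_ i.
pose Ca := [set y in J | L i y == a].
pose b_ j := xchoose (pigeon Ca (fun y => L j y)).
have hb j : (#|Ca| <= p * #|[set y in Ca | L j y == b_ j]|)%N := xchooseP (pigeon Ca (fun y => L j y)).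
have : [exists j, exists x, [&& j \notin U, j != i, x \in N i & L j x != b_ j]].
  apply: contraT => /existsPn H.
  have inj : {in N i &, injective (fun y => L i y)}.
    move=> y1 y2 y1N y2N e.
    have j1 : y1 \in J by move: y1N; rewrite inE => /andP [].
    have j2 : y2 \in J by move: y2N; rewrite inE => /andP [].
    apply: colE => k; case: (boolP (k \in U)) => kU; first exact: agr.
    case: (eqVneq k i) => [-> // | ki].
    have Hk : forall y, y \in N i -> L k y = b_ k.
      move=> y yN; move/existsPn: (H k) => /(_ y).
      by rewrite kU ki yN /= => /negPn/eqP.
    by rewrite !Hk.
  have : (#|N i| <= p.-1)%N.
    have -> : p.-1 = #|[set~ a]| by rewrite cardsC1 card_Fp.
    rewrite -(card_in_imset inj).
    apply/subset_leq_card/fintype.subsetP => z /imsetP [y yN ->].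
    by move: yN; rewrite !inE => /andP [].
  by rewrite leqNgt (leq_trans _ Ni) // prednK ?leqnn // prednK.
case/existsP => j /existsP [x /and4P [jU ji xN xb]].
move: xN; rewrite inE => /andP [xJ xa].
exists i, j, a, (b_ j), x; split => //; first by rewrite eq_sym.
split => //.
apply: leq_trans (ha i) _; rewrite -mulnn -mulnA leq_mul2l; apply/orP; right.
apply: leq_trans (hb j) _; rewrite leq_mul2l; apply/orP; right.
apply/subset_leq_card/fintype.subsetP => y; rewrite !inE => /andP [/andP [yJ yi] yj].
by rewrite yJ yi yj.
Qed.


Lemma build n : forall (J : {set 'I_c}) (U : {set 'I_d}), (#|~: U| <= n)%N ->
  (forall j1 j2 i, j1 \in J -> j2 \in J -> i \in U -> L i j1 = L i j2) ->
  exists m (idx : nat -> 'I_c) (ii jj : nat -> 'I_d) (gam : 'I_d -> 'F_p),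
  [/\ forall t, (t < m)%N -> [/\ idx t \in J, ii t \notin U, jj t \notin U & ii t != jj t],
      forall s t, (s < t)%N -> (t < m)%N ->
        [&& ii t != ii s, ii t != jj s, jj t != ii s & jj t != jj s],
      forall s t, (s < t)%N -> (t < m)%N ->
        L (ii s) (idx t) = gam (ii s) /\ L (jj s) (idx t) = gam (jj s),
      forall t, (t < m)%N -> L (ii t) (idx t) != gam (ii t) /\ L (jj t) (idx t) != gam (jj t) &
      (#|J| <= (1 + d * (p - 1)) * p ^ (2 * m))%N].
Proof.
have stop : forall (J : {set 'I_c}) (U : {set 'I_d}), (#|J| <= 1 + #|~: U| * (p - 1))%N ->
  exists m (idx : nat -> 'I_c) (ii jj : nat -> 'I_d) (gam : 'I_d -> 'F_p),
  [/\ forall t, (t < m)%N -> [/\ idx t \in J, ii t \notin U, jj t \notin U & ii t != jj t],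
      forall s t, (s < t)%N -> (t < m)%N ->
        [&& ii t != ii s, ii t != jj s, jj t != ii s & jj t != jj s],
      forall s t, (s < t)%N -> (t < m)%N ->
        L (ii s) (idx t) = gam (ii s) /\ L (jj s) (idx t) = gam (jj s),
      forall t, (t < m)%N -> L (ii t) (idx t) != gam (ii t) /\ L (jj t) (idx t) != gam (jj t) &
      (#|J| <= (1 + d * (p - 1)) * p ^ (2 * m))%N].
  move=> J U hJ; exists 0%N, (fun _ => j0), (fun _ => i0), (fun _ => i0), (fun _ => 0).
  split => //.
  rewrite muln0 expn0 muln1; apply: leq_trans hJ _; rewrite leq_add2l leq_mul2r.
  by apply/orP; right; rewrite -[X in (_ <= X)%N]card_ord max_card.
elim: n => [|n IH] J U hn agr.
- case: (leqP #|J| (1 + #|~: U| * (p - 1))) => hJ; first exact: stop.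
  have [i [j [a [b [x [iU _ _ _ _]]]]]] := step agr hJ.
  have : (0 < #|~: U|)%N by apply/card_gt0P; exists i; rewrite inE.
  by move: hn; rewrite leqn0 => /eqP ->.
case: (leqP #|J| (1 + #|~: U| * (p - 1))) => hJ; first exact: stop.
have [i [j [a [b [x [iU jU ij xJ [xa xb hb]]]]]]] := step agr hJ.
have ji : j != i by rewrite eq_sym.
pose J' := [set y in J | (L i y == a) && (L j y == b)].
pose U' := i |: (j |: U).
have hU' : (#|~: U'| <= n)%N.
  rewrite -ltnS; apply: leq_trans hn; apply: proper_card.
  apply/properP; split.
    by apply/fintype.subsetP => k; rewrite !inE !negb_or => /and3P [_ _ ->].
  by exists i; rewrite !inE ?eqxx.
have agr' : forall j1 j2 k, j1 \in J' -> j2 \in J' -> k \in U' -> L k j1 = L k j2.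
  move=> j1 j2 k; rewrite !inE => /andP [j1J /andP [/eqP e1 /eqP f1]].
  move=> /andP [j2J /andP [/eqP e2 /eqP f2]].
  case/orP => [/eqP -> | /orP [/eqP -> | kU]]; [by rewrite e1 e2 | by rewrite f1 f2 | exact: agr].
have [m' [idx' [ii' [jj' [gam' [H1 H2 H3 H4 H5]]]]]] := IH J' U' hU' agr'.
have notU' : forall k, k \notin U' -> [/\ k != i, k != j & k \notin U].
  by move=> k; rewrite !inE !negb_or => /and3P [].
exists m'.+1, (fun t => if t is t'.+1 then idx' t' else x),
  (fun t => if t is t'.+1 then ii' t' else i), (fun t => if t is t'.+1 then jj' t' else j),
  (fun k => if k == i then a else if k == j then b else gam' k).
split.
- case => [|t] ht /=; first by split.
  have [h1 h2 h3 h4] := H1 t ht.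
  have [_ _ u2] := notU' _ h2; have [_ _ u3] := notU' _ h3.
  by split => //; move: h1; rewrite inE => /andP [].
- case => [|s] [|t] //= hst ht.
    have [_ h2 h3 _] := H1 t ht.
    by have [-> -> _] := notU' _ h2; have [-> -> _] := notU' _ h3.
  exact: H2.
- case => [|s] [|t] //= hst ht.
    have [h1 _ _ _] := H1 t ht; move: h1; rewrite inE => /andP [_ /andP [/eqP -> /eqP ->]].
    by rewrite eqxx (negbTE ji) eqxx.
  have [e1 e2] := H3 s t hst ht.
  have [_ h2 h3 _] := H1 s (ltn_trans hst ht).
  have [n1 n2 _] := notU' _ h2; have [n3 n4 _] := notU' _ h3.
  by rewrite (negbTE n1) (negbTE n2) (negbTE n3) (negbTE n4).
- case => [|t] ht /=; first by rewrite eqxx (negbTE ji) eqxx.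
  have [_ h2 h3 _] := H1 t ht.
  have [n1 n2 _] := notU' _ h2; have [n3 n4 _] := notU' _ h3.
  rewrite (negbTE n1) (negbTE n2) (negbTE n3) (negbTE n4); exact: H4.
apply: leq_trans hb _.
by rewrite mulnS expnD mulnCA leq_mul2l H5 orbT.
Qed.


End Build.



Lemma comb (p d c : nat) (pp : prime p) (podd : odd p) (L : 'M['F_p]_(d, c))
  (i0 : 'I_d) (j0 : 'I_c) (Ldist : injective (fun j : 'I_c => col j L)) :
  exists m, (c <= (1 + d * (p - 1)) * p ^ (2 * m))%N /\
   (#|[set v : 'cV['F_p]_d | binvec v && binvec (L^T *m v)]| * 4 ^ m
     <= p * 3 ^ m * #|[set v : 'cV['F_p]_d | binvec v]|)%N.
Proof.
have hU : (#|~: (finset.set0 : {set 'I_d})| <= d)%N by rewrite finset.setC0 cardsT card_ord.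
have agr : forall (j1 j2 : 'I_c) (i : 'I_d), j1 \in [set: 'I_c] -> j2 \in [set: 'I_c] ->
  i \in (finset.set0 : {set 'I_d}) -> L i j1 = L i j2 by move=> j1 j2 i _ _; rewrite inE.
have [m [idx [ii [jj [gam [H1 H2 H3 H4 H5]]]]]] := build pp i0 j0 Ldist hU agr.
exists m; split; first by move: H5; rewrite cardsT card_ord.
pose w t i := L i (idx t) - gam i.
have Hij : forall t, (t < m)%N -> ii t != jj t by move=> t /H1 [].
have Htri : forall s t, (s < t)%N -> (t < m)%N -> w t (ii s) = 0 /\ w t (jj s) = 0.
  by move=> s t hs ht; rewrite /w; have [-> ->] := H3 s t hs ht; rewrite !subrr.
have Hnz : forall t, (t < m)%N -> w t (ii t) != 0 /\ w t (jj t) != 0.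
  by move=> t ht; have [h1 h2] := H4 t ht; rewrite /w !subr_eq0.
set E := [set v : 'cV['F_p]_d | binvec v && binvec (L^T *m v)].
have -> : #|E| = (\sum_(g : 'F_p) #|[set v in E | dotc gam v == g]|)%N.
  rewrite -sum1_card (partition_big (fun v => dotc gam v) xpredT) //=.
  by apply: eq_bigr => g _; rewrite sum1dep_card.
rewrite big_distrl /=.
apply: leq_trans (_ : \sum_(g : 'F_p) (3 ^ m * #|[set v : 'cV['F_p]_d | binvec v]|) <= _)%N;
  last by rewrite sum_nat_const card_Fp // mulnA.
apply: leq_sum => g _.
apply: leq_trans (count_main pp podd g Hij H2 Htri Hnz).
rewrite leq_mul2r; apply/orP; right.
apply/subset_leq_card/fintype.subsetP => v; rewrite !inE => /andP [/andP [bv bL] /eqP gv].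
rewrite bv /=; apply/andP; split; first by apply/forallP => s; rewrite ltn0.
apply/forallP => t.
have := forallP bL (idx t); rewrite mxE.
have -> : g + dotc (w t) v = \sum_j L^T (idx t) j * v j 0 => //.
rewrite -gv /dotc -big_split /=; apply: eq_bigr => i _.
by rewrite /w mxE -mulrDl addrC subrK.
Qed.


Lemma core (R : realType) (P D x M l2 l3 k lnc lnD : R) :
 3 <= P -> 0 < x -> x <= P / 2 -> 1/2 <= l2 -> l2 <= 1 -> 5/6 <= l3 ->
 -1/3 <= k -> k <= -1/4 -> 0 <= M -> 0 < D ->
 D * l2 <= 3 * lnc -> lnc <= lnD + x + 2 * M * x -> lnD <= 5 * l2 + D / 32 - 1 ->
 36 * P ^+ 2 * l3 < D * l2 ->
 x + k * M <= l3 - D / (36 * P ^+ 2) * l2.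
Proof.
move=> P3 x0 xP l2a l2b l3a ka kb M0 D0 h1 h2 h3 hq.
set q := 36 * P ^+ 2 in hq *.
have q0 : 0 < q by rewrite /q; nra.
set Y := D * l2 in h1 hq *.
have hD : D <= 2 * Y by rewrite /Y; nra.
have hA : 13/16 * Y - 12 - 3 * x <= 6 * (M * x) by rewrite -mulrA in h2; lra.
have hY : 5/6 * q <= Y by nra.
have qP : q = 36 * P ^+ 2 by [].
have P2 : 3 * P <= P ^+ 2 by rewrite expr2; nra.
have hA0 : 0 <= 13/16 * Y - 12 - 3 * x by lra.
have hP : 6 * x ^+ 2 + 23/4 * x + 3 <= 65 / 384 * q.
  have : x ^+ 2 <= P ^+ 2 / 4 by rewrite !expr2; nra.
  lra.
have hqx : 0 <= 13 / 64 * q - 6 * x by lra.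
have k1 : 6 * x * (Y + q * x - q * l3) <= q * (- k) * (6 * (M * x)).
  have e1 : q * (- k) * (6 * (M * x)) >= q / 4 * (13/16 * Y - 12 - 3 * x).
    have : q * (- k) >= q / 4 by nra.
    nra.
  have e2 : 6 * x * (Y + q * x - q * l3) <= 6 * x * Y + 6 * q * x ^+ 2.
    have : 0 <= q * l3 by nra.
    nra.
  have e3 : Y * (13 / 64 * q - 6 * x) >= 5/6 * q * (13 / 64 * q - 6 * x) by nra.
  nra.
have k2 : Y + q * x - q * l3 <= q * (- k) * M.
  have : 6 * x * (Y + q * x - q * l3) <= 6 * x * (q * (- k) * M) by lra.
  move=> h; have x6 : 0 < 6 * x by lra.
  by rewrite -(ler_pM2l x6).
have -> : D / q * l2 = Y / q by rewrite /Y mulrAC.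
rewrite -(ler_pM2l q0) mulrBr mulrCA divff ?mulr1; last by lra.
lra.
Qed.


Lemma ln_le1 (R : realType) (y : R) : 0 < y -> ln y <= y - 1.
Proof.
move=> y0; have := expR_ge1Dx (ln y); rewrite lnK ?posrE //; lra.
Qed.

Unset Implicit Arguments. Set Strict Implicit.

Theorem lemma4p1 (R : realType) (p c d : nat)
  (pprime : prime p) (podd : odd p) (cpos : (0 < c)%N) (dpos : (0 < d)%N)
  (hdlow : 36 * (ln (p%:R : R) / ln 2) <= d%:R)
  (hdup : d%:R <= 3 * (ln (c%:R : R) / ln 2))
  (L : 'M['F_p]_(d, c))
  (Ldist : injective (fun j : 'I_c => col j L)) :
  prob_binary R L <= 3 * (2 : R) `^ (- (d%:R / (36 * (p%:R ^+ 2)))).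
Proof.
have p3 : (3 <= p)%N.
  by have := prime_gt1 pprime; case: p pprime podd {hdlow hdup L Ldist} => [|[|[|]]].
have [m [hc hE]] := comb pprime podd (Ordinal dpos) (Ordinal cpos) Ldist.
rewrite /prob_binary.
move: hE.
set E := #|[set v : 'cV['F_p]_d | binvec v && binvec (L^T *m v)]|.
set B := #|[set v : 'cV['F_p]_d | binvec v]|.
move=> hE.
have B0 : (0 < B)%N.
  by apply/card_gt0P; exists 0; rewrite inE; apply/forallP => i; rewrite mxE.
have EB : (E <= B)%N.
  by rewrite /E /B; apply: subset_leq_card; apply/fintype.subsetP => v; rewrite !inE => /andP [].
set P : R := p%:R; set D : R := d%:R; set M : R := m%:R.
have B0r : (0 : R) < B%:R by rewrite ltr0n.
have hprob1 : E%:R / B%:R <= (1 : R).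
  by rewrite ler_pdivrMr // mul1r ler_nat.
have hprob : E%:R / B%:R <= P * (3 / 4) ^+ m.
  rewrite ler_pdivrMr // expr_div_n mulrA mulrAC ler_pdivlMr ?exprn_gt0 //.
  have := hE; rewrite -(ler_nat R) !natrM !natrX.
  by rewrite mulrAC.
have pos2 : (0 : R) < 2 by lra.
have l2p : 0 < ln (2 : R) by apply: ln_gt0; lra.
set l2 := ln (2 : R) in l2p hdlow hdup *.
set l3 := ln (3 : R).
have hl2a : 1 / 2 <= l2.
  have := @ln_le1 R (2^-1) ltac:(by rewrite invr_gt0).
  by rewrite lnV ?posrE // -/l2; lra.
have hl2b : l2 <= 1 by have := @ln_le1 R 2 pos2; rewrite -/l2; lra.
have hl3 : 5 / 6 <= l3.
  have := @ln_le1 R (2 / 3) ltac:(lra).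
  by rewrite ln_div ?posrE // -/l2 -/l3; lra.
set k := ln (3 / 4 : R).
have hk1 : k <= -1/4 by have := @ln_le1 R (3 / 4) ltac:(lra); rewrite -/k; lra.
have hk2 : -1/3 <= k.
  have := @ln_le1 R ((3 / 4)^-1) ltac:(lra).
  by rewrite lnV ?posrE -/k ?invf_div; lra.
have P3 : 3 <= P by rewrite /P (ler_nat R 3 p).
have P0 : 0 < P by lra.
set x := ln P.
have hx0 : 0 < x by apply: ln_gt0; lra.
have hxP : x <= P / 2.
  have := @ln_le1 R (P / 2) ltac:(lra).
  by rewrite ln_div ?posrE // -/x -/l2; lra.
have D0 : 0 < D by rewrite /D ltr0n.
have h1 : D * l2 <= 3 * ln (c%:R : R).
  move: hdup; rewrite -(ler_pM2r l2p) -mulrA divfK //; lra.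
have hc' : (c <= d * p ^ (2 * m).+1)%N.
  apply: leq_trans hc _; rewrite expnS mulnA leq_mul2r; apply/orP; right.
  rewrite mulnBr muln1 addnBA ?leq_pmulr ?prime_gt0 //.
  by rewrite leq_subLR addnC [(d + _)%N]addnC leq_add2l.
have h2 : ln (c%:R : R) <= ln D + x + 2 * M * x.
  have cr : (c%:R : R) <= D * P ^+ (2 * m).+1.
    by rewrite /D /P -natrX -natrM ler_nat.
  have c0 : (0 : R) < c%:R by rewrite ltr0n.
  have e : ln (D * P ^+ (2 * m).+1) = ln D + x + 2 * M * x.
    rewrite lnM ?posrE ?exprn_gt0 // lnXn // -/x mulrSr -[x *+ (2 * m)]mulr_natr natrM.
    rewrite -/M; ring.
  rewrite -e; move: cr; rewrite -ler_ln ?posrE //.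
  by apply: mulr_gt0 => //; apply: exprn_gt0.
have h3 : ln D <= 5 * l2 + D / 32 - 1.
  have := @ln_le1 R (D / 32) ltac:(lra).
  rewrite ln_div ?posrE //.
  have -> : ln (32 : R) = 5 * l2.
    have -> : (32 : R) = 2 ^+ 5 by rewrite -natrX.
    by rewrite lnXn // -/l2 mulr_natl.
  lra.
have RHSe : 3 * 2 `^ (- (D / (36 * P ^+ 2))) = expR (l3 - D / (36 * P ^+ 2) * l2).
  rewrite /powR pnatr_eq0 /= expRD lnK ?posrE //.
  by rewrite mulNr.
rewrite RHSe.
case: (lerP (D * l2) (36 * P ^+ 2 * l3)) => hq.
  apply: le_trans hprob1 _.
  apply: (le_trans _ (_ : expR 0 <= _)); first by rewrite expR0.
  rewrite ler_expR subr_ge0 mulrAC ler_pdivrMr; last first.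
    by have := exprn_gt0 2 P0; lra.
  by rewrite [l3 * _]mulrC.
apply: le_trans hprob _.
have M0 : 0 <= M by rewrite /M ler0n.
have key := @core R _ _ _ _ _ _ _ _ _ P3 hx0 hxP hl2a hl2b hl3 hk2 hk1 M0 D0 h1 h2 h3 hq.
have -> : P * (3 / 4) ^+ m = expR (x + k * M).
  rewrite expRD lnK ?posrE // /M expRM_natr lnK ?posrE //; lra.
by rewrite ler_expR.
Qed.
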